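(* Regard the partially spherical subalgebra $e'H_pe'$ as a subring of $\mathscr K=\mathbb{C}(U_1,\dots,U_n)\star(T\rtimes S_n)$ via its action on $\mathbb{C}[U_1,\dots,U_n]$ described below. Then $e'H_pe'$ is a principal Galois $\mathbb{C}[U_1,\dots,U_n]$-order in $\mathscr K$.
   Context: Setting: $\ell,p,n$ positive integers, $p\mid\ell$, $\zeta=e^{2\pi i/\ell}$. $G(\ell,p,n)$ is the group of $n\times n$ monomial matrices with $\ell$-th root of unity entries whose product is an $(\ell/p)$-th root of unity. $H_p$ is the rational Cherednik algebra of $G(\ell,p,n)$ (quotient of $T(\mathfrak h\oplus\mathfrak h^* )\rtimes\mathbb{C}G(\ell,p,n)$, $\mathfrak h=\mathbb{C}^n$, by $[x,x']=0,[y,y']=0,[x,y]=\hbar\langle y,x\rangle-\sum_s c_s\langle\alpha_s,x\rangle\langle y,\alpha_s^\vee\rangle s$) with $\hbar\in\mathbb{C}^\times$, parameter $c$ on the reflections $t_i^kt_j^{-k}(i,j)$ and $c_m$ on $t_i^m$ ($t_i=\mathrm{diag}(1,..,\zeta,..,1)$), where $c_m=0$ unless $p\mid m$. Put $h_r=\sum_{m=1}^{\ell-1}c_m\zeta^{rm}$, $s_m=h_m+m\hbar$ ($m\in\mathbb{Z}$); then $s_{m+\ell/p}=s_m+\ell\hbar/p$. Let $A\subset G(\ell,p,n)$ be the diagonal subgroup and $e'=\frac1{|A|}\sum_{g\in A}g$; the partially spherical subalgebra is $e'H_pe'$. Skew ring: $T\subset\mathbb{Z}^n$ is the lattice generated by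 $\ell e_i$ ($1\le i\le n$) and $\frac{\ell}{p}(e_1+\dots+e_n)$, acting on $\mathbb{C}(U_1,\dots,U_n)$ by $\mu_i(U_j)=U_j+\hbar\delta_{ij}$; $S_n$ permutes the $U_j$. $\mathscr K=\mathbb{C}(U)\star(T\rtimes S_n)$ is the free left $\mathbb{C}(U)$-module on $T\rtimes S_n$ with $(a\mu)(b\nu)=a\mu(b)\mu\nu$; it acts on $K=\mathbb{C}(U)$ by evaluation $(\sum a_\mu\mu)(f)=\sum a_\mu\mu(f)$. Embedding: $H_p$ has a faithful polynomial representation in which $e'H_pe'$ preserves a subspace identified with $\mathbb{C}[U_1,\dots,U_n]$; each element of $e'H_pe'$ acts by the evaluation action of a unique element of $\mathscr K$, and $e'H_pe'$ is generated by elements acting by: multiplication by $U_i$; $f\mapsto f^{w_i}+c\ell\frac{f^{w_i}-f}{U_{i+1}-U_i}$ ($w_i$ swapping $U_i,U_{i+1}$, $1\le i\le n-1$); $f\mapsto\prod_{m=0}^{\ell-1}(U_1+\ell\hbar-s_m)f(U_2,\dots,U_n,U_1+\ell\hbar)$; $f\mapsto f(U_n-\ell\hbar,U_1,\dots,U_{n-1})$; $f\mapsto\prod_{i=1}^n\prod_{m=0}^{\ell/p-1}(U_i+\ell\hbar/p-s_m)f(U_1+\ell\hbar/p,\dots,U_n+\ell\hbar/p)$; $f\mapsto f(U_1-\ell\hbar/p,\dots,U_n-\ell\hbar/p)$; and for $1\le i\le n-1$, $1\le j\le p-1$: $f\mapsto\prod_{r=1}^i\prod_{m=0}^{j\ell/p-1}(U_r+j\ell\hbar/p-s_m)f(U_{i+1}+j\ell\hbar/p-\ell\hbar,\dots,U_n+j\ell\hbar/p-\ell\hbar,U_1+j\ell\hbar/p,\dots,U_i+j\ell\hbar/p)$.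 Definitions (with $\Gamma=\mathbb{C}[U]$): a $\Gamma$-subring $\mathscr U\subseteq\mathscr K$ is a Galois $\Gamma$-ring if $\mathscr UK=\mathscr K=K\mathscr U$; it is a Galois $\Gamma$-order if moreover for every finite-dimensional left (resp. right) $K$-subspace $W\subseteq\mathscr K$, $W\cap\mathscr U$ is a finitely generated left (resp. right) $\Gamma$-module; it is principal if it is a Galois $\Gamma$-ring and $\Gamma\subset K$ is stable under the evaluation action of $\mathscr U$ (principal Galois rings are Galois orders). *)

(* Defs.v *)
From HB Require Import structures.
From mathcomp Require Import all_boot all_order all_algebra all_fingroup.
From mathcomp Require Import generic_quotient fraction.
From mathcomp Require Import mpoly.
From mathcomp Require Import complex Rstruct.
From Stdlib Require Rdefinitions Rtrigo_def Rtrigo1.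

Set Implicit Arguments.
Unset Strict Implicit.
Unset Printing Implicit Defensive.
Import GRing.Theory.
Local Open Scope ring_scope.

Notation "x %:F" := (@FracField.tofrac _ x) : ring_scope.

Definition CC : Type := (Rdefinitions.R)[i].

Definition zeta (l : nat) : CC :=
  Complex (Rtrigo_def.cos (2 * Rtrigo1.PI / l%:R)) (Rtrigo_def.sin (2 * Rtrigo1.PI / l%:R)).

Section Skew.
Variable n : nat.

(* Gamma = C[U_1,...,U_n] (variables indexed by 'I_n, 0-based),
   K = C(U_1,...,U_n) its fraction field. *)
Definition Gam := {mpoly CC[n]}.
Definition KK := {fraction {mpoly CC[n]}}.

(* Group elements g = (sigma, t), sigma a permutation, t in Z^n.  g acts on K
   as the C-algebra automorphism U_j |-> U_(sigma j) + hbar * t_j, i.e.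
   (g f)(U_1,...,U_n) = f(U_(sigma 1) + hbar t_1, ..., U_(sigma n) + hbar t_n). *)
Definition grp := ({perm 'I_n} * {ffun 'I_n -> int})%type.

Variable hb : CC.

Definition psub (g : grp) (q : {mpoly CC[n]}) : {mpoly CC[n]} :=
  q \mPo [tuple ('X_(g.1 j) + (hb * (g.2 j)%:~R)%:MP) | j < n].

Definition act (g : grp) (x : KK) : KK :=
  (psub g \n_(repr x))%:F / (psub g \d_(repr x))%:F.

(* group law, chosen so that act (gmul g h) = act g \o act h *)
Definition gmul (g h : grp) : grp :=
  ((h.1 * g.1)%g, [ffun j => g.2 (h.1 j) + h.2 j]).
Definition gone : grp := (1%g, [ffun=> 0]).

(* Elements of the skew ring K * (T x| S_n): formal finite sums
   sum_k a_k g_k, represented by lists of pairs (a_k, g_k); two lists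
   represent the same element iff they have the same coefficient function. *)
Definition skew := seq (KK * grp).

Definition coefK (s : skew) (g : grp) : KK := \sum_(x <- s | x.2 == g) x.1.
Definition skeq (s t : skew) : Prop := forall g, coefK s g = coefK t g.

Definition skmul (s t : skew) : skew :=
  [seq (x.1 * act x.2 y.1, gmul x.2 y.2) | x <- s, y <- t].

Definition skeval (s : skew) (f : KK) : KK := \sum_(x <- s) x.1 * act x.2 f.

Definition kelt (a : KK) : skew := [:: (a, gone)].

(* T = lattice generated by l e_i (1<=i<=n) and (l/p)(e_1+...+e_n) *)
Definition inT (l p : nat) (t : {ffun 'I_n -> int}) : Prop :=
  exists (k : int) (a : 'I_n -> int),
    forall j, t j = a j * l%:Z + k * (l %/ p)%:Z.

Definition inKK (l p : nat) (s : skew) : Prop :=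
  forall g, coefK s g != 0 -> inT l p g.2.

(* U K = { sum_i u_i k_i } and K U = { sum_i k_i u_i } *)
Definition UK (U : skew -> Prop) (s : skew) : Prop :=
  exists r : seq (skew * KK), (forall u, List.In u r -> U u.1) /\
    skeq s (flatten [seq skmul u.1 (kelt u.2) | u <- r]).
Definition KU (U : skew -> Prop) (s : skew) : Prop :=
  exists r : seq (KK * skew), (forall u, List.In u r -> U u.2) /\
    skeq s (flatten [seq skmul (kelt u.1) u.2 | u <- r]).

Definition gamma_subring (l p : nat) (U : skew -> Prop) : Prop :=
  [/\ forall s, U s -> inKK l p s,
      forall s t, skeq s t -> U s -> U t,
      forall f : {mpoly CC[n]}, U (kelt f%:F),
      forall s t, U s -> U t -> U (s ++ t)
    & forall s t, U s -> U t -> U (skmul s t)].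

Definition galois_ring (l p : nat) (U : skew -> Prop) : Prop :=
  [/\ gamma_subring l p U,
      forall s, UK U s <-> inKK l p s
    & forall s, KU U s <-> inKK l p s].

Definition principal_galois_order (l p : nat) (U : skew -> Prop) : Prop :=
  galois_ring l p U /\
  forall s, U s -> forall f : {mpoly CC[n]},
    exists q : {mpoly CC[n]}, skeval s f%:F = q%:F.

Variables (l p : nat) (c : CC) (cm : nat -> CC).

Definition hh (r : nat) : CC := \sum_(1 <= m < l) cm m * zeta l ^+ (r * m).
Definition ss (m : nat) : CC := hh m + m%:R * hb.

Definition cst (a : CC) : KK := (a%:MP)%:F.
Definition Uf (i : 'I_n) : KK := ('X_i)%:F.
(* U_(j+1) (0-based index j), or 0 if j >= n *)
Definition Uv (j : nat) : KK := if (insub j : option 'I_n) is Some i then Uf i else 0.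

Definition cyc : {perm 'I_n} := perm (@ordS_inj n).

Definition genU (i : 'I_n) : skew := [:: (Uf i, gone)].
(* f |-> f^{w_i} + c l (f^{w_i} - f)/(U_{i+1} - U_i),  i1 = i + 1 *)
Definition genW (i i1 : 'I_n) : skew :=
  let d := cst (c * l%:R) / (Uf i1 - Uf i) in
  [:: (1 + d, (tperm i i1, [ffun=> 0])); (- d, gone)].
(* f |-> prod_{m=0}^{l-1} (U_1 + l hbar - s_m) f(U_2,...,U_n,U_1 + l hbar) *)
Definition genA : skew :=
  [:: (\prod_(m < l) (Uv 0 + cst (l%:R * hb) - cst (ss m)),
       (cyc, [ffun j : 'I_n => if val j == n.-1 then l%:Z else 0]))].
(* f |-> f(U_n - l hbar, U_1, ..., U_{n-1}) *)
Definition genB : skew :=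
  [:: (1, ((cyc^-1)%g, [ffun j : 'I_n => if val j == 0%N then - l%:Z else 0]))].
(* f |-> prod_i prod_{m=0}^{l/p-1} (U_i + l hbar/p - s_m) f(U + l hbar/p) *)
Definition genC : skew :=
  [:: (\prod_(i < n) \prod_(m < l %/ p)
         (Uf i + cst (l%:R * hb / p%:R) - cst (ss m)),
       (1%g, [ffun=> (l %/ p)%:Z]))].
(* f |-> f(U - l hbar/p) *)
Definition genD : skew := [:: (1, (1%g, [ffun=> - (l %/ p)%:Z]))].
(* for 1<=i<=n-1, 1<=j<=p-1:
   f |-> prod_{r=1}^i prod_{m=0}^{jl/p-1} (U_r + j l hbar/p - s_m)
         f(U_{i+1} + j l hbar/p - l hbar, ..., U_n + j l hbar/p - l hbar,
           U_1 + j l hbar/p, ..., U_i + j l hbar/p) *)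
Definition genE (i j : nat) : skew :=
  [:: (\prod_(r < n | (r < i)%N) \prod_(m < j * (l %/ p))
         (Uf r + cst (j%:R * l%:R * hb / p%:R) - cst (ss m)),
       ((cyc ^+ i)%g,
        [ffun k : 'I_n => (j * (l %/ p))%:Z - (if (k < n - i)%N then l%:Z else 0)]))].

(* e'H_p e', viewed in the skew ring: the C-subalgebra generated by the
   elements above (closed under sums and products; scalars included) *)
Inductive gen : skew -> Prop :=
| gen_scal (a : CC) : gen (kelt (cst a))
| gen_U (i : 'I_n) : gen (genU i)
| gen_W (i i1 : 'I_n) : val i1 = (val i).+1 -> gen (genW i i1)
| gen_A : gen genA
| gen_B : gen genB
| gen_C : gen genC
| gen_D : gen genD
| gen_E (i j : nat) : (0 < i < n)%N -> (0 < j < p)%N -> gen (genE i j)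
| gen_add s t : gen s -> gen t -> gen (s ++ t)
| gen_mul s t : gen s -> gen t -> gen (skmul s t).

Definition partSph (s : skew) : Prop := exists t, gen t /\ skeq t s.

End Skew.

(* Main.v *)
Require Import Defs.
From HB Require Import structures.
From mathcomp Require Import all_boot all_order all_algebra all_fingroup.
From mathcomp Require Import generic_quotient fraction mpoly complex Rstruct.
Local Open Scope ring_scope.
Set Implicit Arguments. Unset Strict Implicit. Unset Printing Implicit Defensive.
Import GRing.Theory.

Lemma frac_repr (R : idomainType) (x : {fraction R}) :
  x = (\n_(repr x))%:F / (\d_(repr x))%:F.
Proof.
rewrite -[x in LHS]reprK.
case: (repr x) => [[a b] /= hb].
unlock tofrac.
rewrite !piE.
apply/eqmodP; rewrite /= FracField.equivfE /mulf /invf /=.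
rewrite !(numer_Ratio, denom_Ratio) ?oner_neq0 //=.
  by rewrite mul1r mulr1 mulrC.
  by rewrite mul1r.
by rewrite mul1r.
Qed.

Lemma repr_den_neq0 (R : idomainType) (x : {fraction R}) : \d_(repr x) != 0.
Proof. by case: (repr x) => [[a b] /= hb]. Qed.

Lemma comp_mpolyA (R : comRingType) n k j (p : {mpoly R[n]})
   (lq : n.-tuple {mpoly R[k]}) (lr : k.-tuple {mpoly R[j]}) :
  (p \mPo lq) \mPo lr = p \mPo [tuple (tnth lq i \mPo lr) | i < n].
Proof.
rewrite (comp_mpolyEX p lq) (comp_mpolyEX p) raddf_sum /=.
apply: eq_bigr => m _; rewrite comp_mpolyZ; congr (_ *: _).
rewrite !comp_mpolyX rmorph_prod /=; apply: eq_bigr => i _.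
by rewrite rmorphXn /= tnth_mktuple.
Qed.

Lemma frac_addE (R : idomainType) (a b c d : R) : b != 0 -> d != 0 ->
  (a * d + c * b)%:F / (b * d)%:F = a%:F / b%:F + c%:F / d%:F.
Proof.
move=> b0 d0; rewrite addf_div ?tofrac_eq0 //.
by rewrite tofracD !tofracM.
Qed.

Lemma frac_mulE (R : idomainType) (a b c d : R) : b != 0 -> d != 0 ->
  (a * c)%:F / (b * d)%:F = a%:F / b%:F * (c%:F / d%:F).
Proof.
by move=> b0 d0; rewrite !tofracM invfM mulrACA.
Qed.

Section P1.
Variable n : nat.
Variable hb : CC.
Local Notation MP := {mpoly CC[n]}.
Local Notation K := (KK n).
Local Notation psub := (@Defs.psub n hb).
Local Notation act := (@Defs.act n hb).
Implicit Types g h k : grp n.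

Definition ginv (g : grp n) : grp n := ((g.1^-1)%g, [ffun j => - g.2 ((g.1^-1)%g j)]).

Lemma gmulV g : gmul g (ginv g) = gone n.
Proof.
rewrite /gmul /ginv /gone /=; congr (_, _); first by rewrite mulVg.
by apply/ffunP => j; rewrite !ffunE addrN.
Qed.

Lemma gmulVg g : gmul (ginv g) g = gone n.
Proof.
rewrite /gmul /ginv /gone /=; congr (_, _); first by rewrite mulgV.
by apply/ffunP => j; rewrite !ffunE permK addNr.
Qed.

Lemma gmulA g h k : gmul g (gmul h k) = gmul (gmul g h) k.
Proof.
rewrite /gmul /=; congr (_, _); first by rewrite mulgA.
by apply/ffunP => j; rewrite !ffunE permM addrA.
Qed.

Lemma gmul1g g : gmul (gone n) g = g.
Proof.
case: g => s t; rewrite /gmul /gone /=; congr (_, _); first by rewrite mulg1.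
by apply/ffunP => j; rewrite !ffunE add0r.
Qed.

Lemma gmulg1 g : gmul g (gone n) = g.
Proof.
case: g => s t; rewrite /gmul /gone /=; congr (_, _); first by rewrite mul1g.
by apply/ffunP => j; rewrite !ffunE perm1 addr0.
Qed.

Lemma psubD g : {morph psub g : x y / x + y}.
Proof. by move=> x y; rewrite /Defs.psub raddfD. Qed.
Lemma psubN g : {morph psub g : x / - x}.
Proof. by move=> x; rewrite /Defs.psub raddfN. Qed.
Lemma psubM g : {morph psub g : x y / x * y}.
Proof. by move=> x y; rewrite /Defs.psub rmorphM. Qed.
Lemma psub1 g : psub g 1 = 1.
Proof. by rewrite /Defs.psub comp_mpoly1. Qed.
Lemma psubC g c : psub g c%:MP = c%:MP.
Proof. by rewrite /Defs.psub comp_mpolyC. Qed.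
Lemma psubX g i : psub g 'X_i = 'X_(g.1 i) + (hb * (g.2 i)%:~R)%:MP.
Proof. by rewrite /Defs.psub comp_mpolyXU -tnth_nth tnth_mktuple. Qed.

Lemma psub_comp g h q : psub g (psub h q) = psub (gmul g h) q.
Proof.
rewrite /Defs.psub comp_mpolyA; apply: (congr1 (fun t => comp_mpoly t q)).
apply: eq_from_tnth => i; rewrite !tnth_mktuple.
rewrite raddfD /= comp_mpolyXU comp_mpolyC -tnth_nth tnth_mktuple.
rewrite /gmul /= ffunE permM -addrA; congr (_ + _).
by rewrite -mpolyCD intrD mulrDr.
Qed.

Lemma psub1g q : psub (gone n) q = q.
Proof.
rewrite /Defs.psub -[RHS]comp_mpoly_id; apply: (congr1 (fun t => comp_mpoly t q)).
apply: eq_from_tnth => i; rewrite !tnth_mktuple /gone /= ffunE perm1.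
by rewrite mulr0 addr0.
Qed.

Lemma psub_inj g : injective (psub g).
Proof.
move=> x y e.
transitivity (psub (gmul (ginv g) g) x); first by rewrite gmulVg psub1g.
by rewrite -psub_comp e psub_comp gmulVg psub1g.
Qed.

Lemma psub_eq0 g q : (psub g q == 0) = (q == 0).
Proof.
apply/eqP/eqP => [e|->]; last by rewrite /Defs.psub comp_mpoly0.
by apply: (@psub_inj g); rewrite e /Defs.psub comp_mpoly0.
Qed.

Lemma act_frac g (a b : MP) : b != 0 ->
  act g (a%:F / b%:F) = (psub g a)%:F / (psub g b)%:F.
Proof.
move=> b0; rewrite /Defs.act.
set x := a%:F / b%:F.
have d0 := repr_den_neq0 x.
have := frac_repr x; rewrite {1}/x => e.
have e2 : a * \d_(repr x) = b * \n_(repr x).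
  apply/eqP; rewrite -tofrac_eq !tofracM; apply/eqP.
  move: e; move/(congr1 (fun y => y * b%:F * (\d_(repr x))%:F)).
  rewrite mulfVK ?tofrac_eq0 // => ->.
  by rewrite mulrAC mulfVK ?tofrac_eq0 // mulrC.
apply/eqP; rewrite eqr_div; [|by rewrite tofrac_eq0 psub_eq0|by rewrite tofrac_eq0 psub_eq0].
rewrite -[X in X == _]tofracM -[X in _ == X]tofracM tofrac_eq.
rewrite -[X in X == _]psubM -[X in _ == X]psubM; apply/eqP.
apply: (congr1 (fun q => psub g q)).
by rewrite e2 mulrC.
Qed.

Lemma act_tofrac g (a : MP) : act g a%:F = (psub g a)%:F.
Proof.
have := @act_frac g a 1 (oner_neq0 _).
by rewrite tofrac1 divr1 psub1 tofrac1 divr1.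
Qed.

Lemma act_gen (x : K) : exists a b : MP, b != 0 /\ x = a%:F / b%:F.
Proof. by exists (\n_(repr x)), (\d_(repr x)); split; [apply: repr_den_neq0|apply: frac_repr]. Qed.

Lemma tofrac_neq0 (b : MP) : b != 0 -> b%:F != 0 :> K.
Proof. by rewrite tofrac_eq0. Qed.

Lemma psub_neq0 g (b : MP) : b != 0 -> psub g b != 0.
Proof. by rewrite psub_eq0. Qed.

Lemma actD g (x y : K) : act g (x + y) = act g x + act g y.
Proof.
have [a [b [b0 ->]]] := act_gen x.
have [c [d [d0 ->]]] := act_gen y.
have bd0 : b * d != 0 by rewrite mulf_neq0.
rewrite -frac_addE // (act_frac _ _ bd0) (act_frac _ _ b0) (act_frac _ _ d0).
rewrite psubD 3!psubM frac_addE //; exact: psub_neq0.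
Qed.

Lemma actM g (x y : K) : act g (x * y) = act g x * act g y.
Proof.
have [a [b [b0 ->]]] := act_gen x.
have [c [d [d0 ->]]] := act_gen y.
have bd0 : b * d != 0 by rewrite mulf_neq0.
rewrite -frac_mulE // (act_frac _ _ bd0) (act_frac _ _ b0) (act_frac _ _ d0).
rewrite 2!psubM frac_mulE //; exact: psub_neq0.
Qed.

Lemma act1 g : act g 1 = 1.
Proof. by rewrite -tofrac1 act_tofrac psub1. Qed.

Lemma act0 g : act g 0 = 0.
Proof. by rewrite -tofrac0 act_tofrac /Defs.psub comp_mpoly0. Qed.

Lemma actN g (x : K) : act g (- x) = - act g x.
Proof.
apply/eqP; rewrite -subr_eq0 opprK -actD.
by rewrite addNr act0.
Qed.

Lemma act_sum g (I : Type) (r : seq I) (P : pred I) (F : I -> K) :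
  act g (\sum_(i <- r | P i) F i) = \sum_(i <- r | P i) act g (F i).
Proof. exact: (big_morph _ (actD g) (act0 g)). Qed.

Lemma act_comp g h (x : K) : act g (act h x) = act (gmul g h) x.
Proof.
have [a [b [b0 ->]]] := act_gen x.
rewrite (act_frac _ _ b0) (act_frac _ _ (psub_neq0 h b0)) (act_frac _ _ b0).
exact: (congr2 (fun u v => u%:F / v%:F) (psub_comp g h a) (psub_comp g h b)).
Qed.

Lemma act1g (x : K) : act (gone n) x = x.
Proof.
have [a [b [b0 ->]]] := act_gen x.
rewrite (act_frac _ _ b0).
exact: (congr2 (fun u v => u%:F / v%:F) (psub1g a) (psub1g b)).
Qed.

Lemma actK g (x : K) : act (ginv g) (act g x) = x.
Proof. by rewrite act_comp gmulVg act1g. Qed.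

Lemma actKV g (x : K) : act g (act (ginv g) x) = x.
Proof. by rewrite act_comp gmulV act1g. Qed.

Lemma act_eq0 g (x : K) : (act g x == 0) = (x == 0).
Proof.
apply/eqP/eqP => [e|->]; last exact: act0.
by rewrite -(actK g x) e act0.
Qed.

Lemma actV g (x : K) : act g (x^-1) = (act g x)^-1.
Proof.
have [->|x0] := eqVneq x 0; first by rewrite invr0 act0 invr0.
apply: (@mulfI _ (act g x)); first by rewrite act_eq0.
by rewrite -actM !divff ?act_eq0 // act1.
Qed.

End P1.

Local Notation coefK := Defs.coefK.
Local Notation genD := Defs.genD.

Lemma sum_pred1_uniq (T : eqType) (R : nmodType) (L : seq T) (a : T) (F : T -> R) :
  uniq L -> a \in L -> \sum_(g <- L | a == g) F g = F a.
Proof.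
move=> uL aL; rewrite (big_rem a) //= eqxx big1_seq ?addr0 // => g /andP[/eqP <-].
by rewrite (mem_rem_uniq _ uL) inE eqxx.
Qed.

Section P2.
Variable n : nat.
Variable hb : CC.
Local Notation MP := {mpoly CC[n]}.
Local Notation K := (KK n).
Local Notation GR := (grp n).
Local Notation SK := (Defs.skew n).
Local Notation psub := (@Defs.psub n hb).
Local Notation act := (@Defs.act n hb).
Local Notation skmul := (@Defs.skmul n hb).
Local Notation skeval := (@Defs.skeval n hb).
Implicit Types (g h : GR) (s t : SK) (a b : K).

Lemma coefK_cons (x : K * GR) s g :
  coefK (x :: s) g = (if x.2 == g then x.1 else 0) + coefK s g.
Proof. by rewrite /coefK big_cons; case: ifP; rewrite ?add0r. Qed.

Lemma coefK_nil g : coefK ([::] : SK) g = 0.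
Proof. by rewrite /coefK big_nil. Qed.

Lemma coefK_cat s t g : coefK (s ++ t) g = coefK s g + coefK t g.
Proof. by rewrite /coefK big_cat. Qed.

Lemma coefK_kelt a g : coefK (kelt a) g = if gone n == g then a else 0.
Proof. by rewrite coefK_cons coefK_nil addr0. Qed.

Lemma coefK_single a g' g : coefK [:: (a, g')] g = if g' == g then a else 0.
Proof. by rewrite coefK_cons coefK_nil addr0. Qed.

Lemma skeq_refl s : skeq s s. Proof. by []. Qed.
Lemma skeq_sym s t : skeq s t -> skeq t s. Proof. by move=> e g; rewrite e. Qed.
Lemma skeq_trans s t u : skeq s t -> skeq t u -> skeq s u.
Proof. by move=> e1 e2 g; rewrite e1 e2. Qed.
Lemma skeq_cat s s' t t' : skeq s s' -> skeq t t' -> skeq (s ++ t) (s' ++ t').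
Proof. by move=> e1 e2 g; rewrite !coefK_cat e1 e2. Qed.

Lemma sum_coefK (F : GR -> K) s (L : seq GR) :
  uniq L -> {subset map snd s <= L} ->
  \sum_(x <- s) x.1 * F x.2 = \sum_(g <- L) coefK s g * F g.
Proof.
move=> uL; elim: s => [|x s IH] sL.
  by rewrite big_nil big1 // => g _; rewrite coefK_nil mul0r.
rewrite big_cons IH; last by move=> g gs; apply: sL; rewrite inE gs orbT.
under [in RHS]eq_bigr => g _ do rewrite coefK_cons mulrDl.
rewrite big_split /=; congr (_ + _).
rewrite (eq_bigr (fun g => if x.2 == g then x.1 * F g else 0)); last first.
  by move=> g _; case: ifP; rewrite ?mul0r.
rewrite -big_mkcond sum_pred1_uniq //=.
by apply: sL; rewrite inE eqxx.
Qed.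

Lemma sum_skeq (F : GR -> K) s t : skeq s t ->
  \sum_(x <- s) x.1 * F x.2 = \sum_(x <- t) x.1 * F x.2.
Proof.
move=> e.
have uL := undup_uniq (map snd (s ++ t)).
rewrite (sum_coefK F uL) ?(sum_coefK F uL); first by apply: eq_bigr => g _; rewrite e.
- by move=> g gt; rewrite mem_undup map_cat mem_cat gt orbT.
- by move=> g gs; rewrite mem_undup map_cat mem_cat gs.
Qed.

Lemma coefK_eq0 s g : (forall x, x \in s -> x.2 != g) -> coefK s g = 0.
Proof.
move=> H; rewrite /coefK big1_seq // => x /andP[xg xs].
by move: (H x xs); rewrite xg.
Qed.

Lemma coefK_neq0 s g : coefK s g != 0 -> exists2 x, x \in s & x.2 = g.
Proof.
move=> c0; case: (boolP (has (fun x : K * GR => x.2 == g) s)).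
  by case/hasP => x xs /eqP xg; exists x.
move/hasPn => H; move: c0; rewrite coefK_eq0 ?eqxx //.
Qed.

Lemma coefK_skmul s t g :
  coefK (skmul s t) g =
  \sum_(x <- s) x.1 * act x.2 (coefK t (gmul (ginv x.2) g)).
Proof.
rewrite /coefK /Defs.skmul big_mkcond big_allpairs_dep /=.
apply: eq_bigr => x _.
rewrite act_sum big_distrr /= [RHS]big_mkcond /=.
apply: eq_bigr => y _.
have -> : (gmul x.2 y.2 == g) = (y.2 == gmul (ginv x.2) g).
  apply/eqP/eqP => [<-|->]; first by rewrite gmulA gmulVg gmul1g.
  by rewrite gmulA gmulV gmul1g.
by case: ifP => _; rewrite ?act0 ?mulr0.
Qed.

Lemma skmul_skeq s s' t t' : skeq s s' -> skeq t t' -> skeq (skmul s t) (skmul s' t').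
Proof.
move=> e1 e2 g; rewrite !coefK_skmul.
rewrite (sum_skeq (fun h => act h (coefK t (gmul (ginv h) g))) e1).
by apply: eq_bigr => x _; rewrite e2.
Qed.

Lemma skeval_skeq s t f : skeq s t -> skeval s f = skeval t f.
Proof. exact: (sum_skeq (fun h => act h f)). Qed.

Lemma skeval_cat s t f : skeval (s ++ t) f = skeval s f + skeval t f.
Proof. by rewrite /Defs.skeval big_cat. Qed.

Lemma skeval_mul s t f : skeval (skmul s t) f = skeval s (skeval t f).
Proof.
rewrite /Defs.skeval /Defs.skmul big_allpairs_dep /=.
apply: eq_bigr => x _; rewrite act_sum big_distrr /=.
apply: eq_bigr => y _.
by rewrite actM -act_comp mulrA.
Qed.

Lemma skeval_single a g f : skeval [:: (a, g)] f = a * act g f.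
Proof. by rewrite /Defs.skeval big_cons big_nil addr0. Qed.

Lemma skmul_single a g b h :
  skmul [:: (a, g)] [:: (b, h)] = [:: (a * act g b, gmul g h)].
Proof. by []. Qed.

Lemma skmul_single_skeq a g b h :
  skeq (skmul [:: (a, g)] [:: (b, h)]) [:: (a * act g b, gmul g h)].
Proof. by []. Qed.

Lemma kelt_mul a b : skeq (skmul (kelt a) (kelt b)) (kelt (a * b)).
Proof.
move=> g; rewrite /kelt skmul_single.
by rewrite act1g gmul1g.
Qed.

Lemma kelt_add a b : skeq (kelt a ++ kelt b) (kelt (a + b)).
Proof. by move=> g; rewrite coefK_cat !coefK_kelt; case: ifP; rewrite ?addr0. Qed.

Lemma skeq_single_add a b g : skeq [:: (a, g); (b, g)] [:: (a + b, g)].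
Proof.
by move=> h; rewrite !coefK_cons coefK_nil; case: ifP; rewrite ?addr0.
Qed.

Lemma skeq_single0 g : skeq [:: (0, g)] [::].
Proof. by move=> h; rewrite coefK_single coefK_nil; case: ifP. Qed.

End P2.


Section P3.
Variables (n : nat) (hb : CC) (l p : nat) (c : CC) (cm : nat -> CC).
Local Notation MP := {mpoly CC[n]}.
Local Notation K := (KK n).
Local Notation GR := (grp n).
Local Notation SK := (Defs.skew n).
Local Notation act := (@Defs.act n hb).
Local Notation skmul := (@Defs.skmul n hb).
Local Notation skeval := (@Defs.skeval n hb).
Local Notation U := (@partSph n hb l p c cm).
Local Notation gen := (@Defs.gen n hb l p c cm).
Implicit Types (g h : GR) (s t : SK) (a b : K).

Lemma gen_partSph t : gen t -> U t.
Proof. by move=> gt; exists t. Qed.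

Lemma partSph_skeq s t : U s -> skeq s t -> U t.
Proof. by case=> u [gu e] e2; exists u; split => //; apply: skeq_trans e2. Qed.

Lemma partSph_cat s t : U s -> U t -> U (s ++ t).
Proof.
case=> u [gu e] [v [gv e']]; exists (u ++ v); split; first exact: gen_add.
exact: skeq_cat.
Qed.

Lemma partSph_mul s t : U s -> U t -> U (skmul s t).
Proof.
case=> u [gu e] [v [gv e']]; exists (skmul u v); split; first exact: gen_mul.
exact: skmul_skeq.
Qed.

Definition PK a := U (kelt a).

Lemma PK_add a b : PK a -> PK b -> PK (a + b).
Proof. by move=> ha hb'; apply: partSph_skeq (kelt_add a b); apply: partSph_cat. Qed.

Lemma PK_mul a b : PK a -> PK b -> PK (a * b).
Proof. by move=> ha hb'; apply: partSph_skeq (@kelt_mul n hb a b); apply: partSph_mul. Qed.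

Lemma PK_cst x : PK (cst n x).
Proof. exact/gen_partSph/gen_scal. Qed.

Lemma PK_U i : PK (Uf i).
Proof. exact/gen_partSph/gen_U. Qed.

Lemma PK_0 : PK 0.
Proof. by have := PK_cst 0; rewrite /cst mpolyC0 tofrac0. Qed.

Lemma PK_1 : PK 1.
Proof. by have := PK_cst 1; rewrite /cst mpolyC1 tofrac1. Qed.

Lemma PK_exp a k : PK a -> PK (a ^+ k).
Proof.
move=> ha; elim: k => [|k IH]; first by rewrite expr0; exact: PK_1.
by rewrite exprS; apply: PK_mul.
Qed.

Lemma poly_frac_expand (f : MP) :
  f%:F = \sum_(m <- msupp f) cst n (f@_m) * \prod_(i < n) (Uf i) ^+ (m i).
Proof.
rewrite {1}(mpolyE f) rmorph_sum; apply: eq_bigr => m _.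
rewrite /cst /Uf -mul_mpolyC rmorphM /=; congr (_ * _).
rewrite mpolyXE_id rmorph_prod /=; apply: eq_bigr => i _.
by rewrite rmorphXn.
Qed.

Lemma PK_poly (f : MP) : PK (f%:F).
Proof.
rewrite poly_frac_expand; apply: (big_ind PK PK_0 PK_add) => m _.
apply: PK_mul; first exact: PK_cst.
apply: (big_ind PK PK_1 PK_mul) => i _; exact/PK_exp/PK_U.
Qed.

End P3.


Section P4.
Variables (n : nat) (hb : CC) (l p : nat) (c : CC) (cm : nat -> CC).
Local Notation K := (KK n).
Local Notation GR := (grp n).
Local Notation SK := (Defs.skew n).
Local Notation act := (@Defs.act n hb).
Local Notation skmul := (@Defs.skmul n hb).
Local Notation U := (@partSph n hb l p c cm).
Local Notation gen := (@Defs.gen n hb l p c cm).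
Implicit Types (g h : GR) (s t : SK) (a b : K).

Lemma inT_ex (f : 'I_n -> int) (k : int) (a : 'I_n -> int) :
  (forall j, f j = a j * l%:Z + k * (l %/ p)%:Z) -> inT l p [ffun j => f j].
Proof. by move=> H; exists k, a => j; rewrite ffunE H. Qed.

Lemma inT_gone : inT l p (gone n).2.
Proof. by exists 0, (fun _ => 0) => j; rewrite ffunE !mul0r addr0. Qed.

Lemma inT_gmul g h : inT l p g.2 -> inT l p h.2 -> inT l p (gmul g h).2.
Proof.
case=> k [a Ha] [k' [a' Ha']]; exists (k + k'), (fun j => a (h.1 j) + a' j) => j.
rewrite /gmul /= ffunE Ha Ha' !mulrDl.
by rewrite addrACA.
Qed.

Lemma gen_inT t : gen t -> forall x, x \in t -> inT l p x.2.2.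
Proof.
elim => {t}.
- by move=> a x; rewrite inE => /eqP ->; exact: inT_gone.
- by move=> i x; rewrite inE => /eqP ->; exact: inT_gone.
- move=> i i1 _ x; rewrite !inE => /orP[] /eqP -> /=; last exact: inT_gone.
  by exists 0, (fun _ => 0) => j; rewrite ffunE !mul0r addr0.
- move=> x; rewrite inE => /eqP -> /=.
  exists 0, (fun j : 'I_n => if val j == n.-1 then 1 else 0) => j.
  by rewrite ffunE mul0r addr0; case: ifP; rewrite ?mul1r ?mul0r.
- move=> x; rewrite inE => /eqP -> /=.
  exists 0, (fun j : 'I_n => if val j == 0%N then -1 else 0) => j.
  by rewrite ffunE mul0r addr0; case: ifP; rewrite ?mulN1r ?mul0r.
- move=> x; rewrite inE => /eqP -> /=.
  by exists 1, (fun _ => 0) => j; rewrite ffunE mul0r add0r mul1r.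
- move=> x; rewrite inE => /eqP -> /=.
  by exists (-1), (fun _ => 0) => j; rewrite ffunE mul0r add0r mulN1r.
- move=> i j _ _ x; rewrite inE => /eqP -> /=.
  exists j%:Z, (fun k : 'I_n => if (k < n - i)%N then -1 else 0) => k.
  rewrite ffunE PoszM addrC; congr (_ + _).
  by case: ifP; rewrite ?mulN1r ?mul0r ?subr0.
- move=> s t _ Hs _ Ht x; rewrite mem_cat => /orP[]; [exact: Hs|exact: Ht].
- move=> s t _ Hs _ Ht x /allpairsPdep [x1 [y1 [x1s y1t ->]]] /=.
  exact: inT_gmul (Hs _ x1s) (Ht _ y1t).
Qed.

Lemma partSph_inKK s : U s -> inKK l p s.
Proof.
case=> t [gt e] g; rewrite -e => /coefK_neq0 [x xt <-].
exact: gen_inT gt x xt.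
Qed.

End P4.


Section Dv.
Variable R : comRingType.
Definition Dv (d x : R) := exists q, x = d * q.
Lemma Dv0 d : Dv d 0. Proof. by exists 0; rewrite mulr0. Qed.
Lemma DvD d x y : Dv d x -> Dv d y -> Dv d (x + y).
Proof. by case=> a -> [b ->]; exists (a + b); rewrite mulrDr. Qed.
Lemma DvN d x : Dv d x -> Dv d (- x).
Proof. by case=> a ->; exists (- a); rewrite mulrN. Qed.
Lemma DvMl d x y : Dv d x -> Dv d (y * x).
Proof. by case=> a ->; exists (y * a); rewrite mulrCA. Qed.
Lemma DvMr d x y : Dv d x -> Dv d (x * y).
Proof. by move=> h; rewrite mulrC; apply: DvMl. Qed.
Lemma Dv_sum d (I : Type) (r : seq I) (F : I -> R) :
  (forall i, Dv d (F i)) -> Dv d (\sum_(i <- r) F i).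
Proof. by move=> H; elim/big_rec: _ => [|i x _ hx]; [apply: Dv0|apply: DvD]. Qed.

Lemma Dv_exp d x y m : Dv d (x - y) -> Dv d (x ^+ m - y ^+ m).
Proof.
move=> h; elim: m => [|m IH]; first by rewrite !expr0 subrr; apply: Dv0.
have -> : x ^+ m.+1 - y ^+ m.+1 = (x - y) * x ^+ m + y * (x ^+ m - y ^+ m).
  by rewrite !exprS mulrBl mulrBr addrA addrNK.
by apply: DvD; [apply: DvMr|apply: DvMl].
Qed.

Lemma Dv_prod d (I : Type) (r : seq I) (A B : I -> R) :
  (forall i, Dv d (A i - B i)) ->
  Dv d (\prod_(i <- r) A i - \prod_(i <- r) B i).
Proof.
move=> H; elim: r => [|a r IH]; first by rewrite !big_nil subrr; apply: Dv0.
rewrite !big_cons.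
have -> : A a * \prod_(i <- r) A i - B a * \prod_(i <- r) B i =
  (A a - B a) * \prod_(i <- r) A i + B a * (\prod_(i <- r) A i - \prod_(i <- r) B i).
  by rewrite mulrBl mulrBr addrA addrNK.
by apply: DvD; [apply: DvMr|apply: DvMl].
Qed.
End Dv.

Lemma Dv_comp (R : comRingType) n k (d : {mpoly R[k]}) (f : {mpoly R[n]})
  (t t' : n.-tuple {mpoly R[k]}) :
  (forall i, Dv d (tnth t i - tnth t' i)) -> Dv d ((f \mPo t) - (f \mPo t')).
Proof.
move=> H; rewrite (comp_mpolyEX f t) (comp_mpolyEX f t') -sumrB.
apply: Dv_sum => m; rewrite -scalerBr !comp_mpolyX -mul_mpolyC.
by apply: DvMl; apply: Dv_prod => i; apply: Dv_exp.
Qed.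

Section P5.
Variables (n : nat) (hb : CC) (l p : nat) (c : CC) (cm : nat -> CC).
Local Notation MP := {mpoly CC[n]}.
Local Notation K := (KK n).
Local Notation GR := (grp n).
Local Notation SK := (Defs.skew n).
Local Notation psub := (@Defs.psub n hb).
Local Notation act := (@Defs.act n hb).
Local Notation skmul := (@Defs.skmul n hb).
Local Notation skeval := (@Defs.skeval n hb).
Local Notation U := (@partSph n hb l p c cm).
Local Notation gen := (@Defs.gen n hb l p c cm).
Implicit Types (g h : GR) (s t : SK) (a b : K).

Definition IP (x : K) := exists q : MP, x = q%:F.

Lemma IP_poly (q : MP) : IP q%:F. Proof. by exists q. Qed.
Lemma IP_add x y : IP x -> IP y -> IP (x + y).
Proof. by case=> a -> [b ->]; exists (a + b); rewrite tofracD. Qed.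
Lemma IP_mul x y : IP x -> IP y -> IP (x * y).
Proof. by case=> a -> [b ->]; exists (a * b); rewrite tofracM. Qed.
Lemma IP_opp x : IP x -> IP (- x).
Proof. by case=> a ->; exists (- a); rewrite tofracN. Qed.
Lemma IP_1 : IP 1. Proof. by exists 1; rewrite tofrac1. Qed.
Lemma IP_0 : IP 0. Proof. by exists 0; rewrite tofrac0. Qed.
Lemma IP_cst x : IP (cst n x). Proof. exact: IP_poly. Qed.
Lemma IP_Uf i : IP (Uf i). Proof. exact: IP_poly. Qed.
Lemma IP_Uv j : IP (Uv n j).
Proof. by rewrite /Uv; case: insub => [i|]; [apply: IP_Uf|apply: IP_0]. Qed.
Lemma IP_prod (I : Type) (r : seq I) (P : pred I) (F : I -> K) :
  (forall i, IP (F i)) -> IP (\prod_(i <- r | P i) F i).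
Proof. by move=> H; elim/big_rec: _ => [|i x _ hx]; [apply: IP_1|apply: IP_mul]. Qed.
Lemma IP_act g x : IP x -> IP (act g x).
Proof. by case=> a ->; rewrite act_tofrac; apply: IP_poly. Qed.

Lemma IP_single a g x : IP a -> IP x -> IP (skeval [:: (a, g)] x).
Proof. by move=> ha hx; rewrite skeval_single; apply: IP_mul => //; apply: IP_act. Qed.

Lemma skeval_two a g b h x : skeval [:: (a, g); (b, h)] x = a * act g x + b * act h x.
Proof. by rewrite /Defs.skeval !big_cons big_nil [X in _ + X]addr0. Qed.

Lemma swap_Dv (i j : 'I_n) (f : MP) :
  Dv ('X_j - 'X_i) (psub (tperm i j, [ffun=> 0]) f - f).
Proof.
rewrite /Defs.psub.
have {2}-> : f = f \mPo [tuple 'X_k | k < n] by rewrite comp_mpoly_id.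
apply: Dv_comp => k; rewrite !tnth_mktuple ffunE /= mulr0 mpolyC0 addr0.
case: (tpermP i j k) => [->|->|/eqP ki /eqP kj].
- by exists 1; rewrite mulr1.
- by exists (-1); rewrite mulrN1 opprB.
- by rewrite subrr; apply: Dv0.
Qed.

Lemma IP_genW i i1 x : val i1 = (val i).+1 -> IP x -> IP (skeval (@genW n l c i i1) x).
Proof.
move=> e [f ->]; rewrite /genW skeval_two.
rewrite act1g act_tofrac.
have ne : i != i1 by apply/eqP => h; move: e; rewrite h => /n_Sn.
have [q eq] := swap_Dv i i1 f.
move: (psub _ f) eq => w eq.
have dd : Uf i1 - Uf i != 0.
  rewrite /Uf -tofracB tofrac_eq0 subr_eq0.
  apply/eqP => /(congr1 (mcoeff U_(i1))); rewrite !mcoeffXU eqxx.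
  by rewrite (negbTE ne) => /eqP; rewrite oner_eq0.
have -> : (1 + cst n (c * l%:R) / (Uf i1 - Uf i)) * w%:F +
    - (cst n (c * l%:R) / (Uf i1 - Uf i)) * f%:F =
    w%:F + cst n (c * l%:R) * ((w - f)%:F / (Uf i1 - Uf i)).
  rewrite tofracB mulrDl mul1r mulNr -addrA; congr (_ + _).
  move: (cst n _) (Uf i1 - Uf i) (w%:F) (f%:F) => A B C D.
  by rewrite -mulrBr -mulrA [_^-1 * _]mulrC.
rewrite eq tofracM tofracB -/(Uf i1) -/(Uf i).
move: (Uf i1 - Uf i) dd => A dd; rewrite [A * _]mulrC mulfK //.
by apply: IP_add; [apply: IP_poly|apply: IP_mul; [apply: IP_cst|apply: IP_poly]].
Qed.

Lemma gen_IP t : gen t -> forall x, IP x -> IP (skeval t x).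
Proof.
elim => {t}.
- by move=> a x hx; apply: IP_single => //; apply: IP_cst.
- by move=> i x hx; apply: IP_single => //; apply: IP_Uf.
- by move=> i i1 e x hx; apply: IP_genW.
- move=> x hx; apply: IP_single => //; apply: IP_prod => m.
  by apply: IP_add; [apply: IP_add; [apply: IP_Uv|apply: IP_cst]|apply/IP_opp/IP_cst].
- by move=> x hx; apply: IP_single => //; apply: IP_1.
- move=> x hx; apply: IP_single => //; apply: IP_prod => i; apply: IP_prod => m.
  by apply: IP_add; [apply: IP_add; [apply: IP_Uf|apply: IP_cst]|apply/IP_opp/IP_cst].
- by move=> x hx; apply: IP_single => //; apply: IP_1.
- move=> i j _ _ x hx; apply: IP_single => //; apply: IP_prod => r; apply: IP_prod => m.
  by apply: IP_add; [apply: IP_add; [apply: IP_Uf|apply: IP_cst]|apply/IP_opp/IP_cst].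
- by move=> s t _ Hs _ Ht x hx; rewrite skeval_cat; apply: IP_add; [apply: Hs|apply: Ht].
- by move=> s t _ Hs _ Ht x hx; rewrite skeval_mul; apply: Hs; apply: Ht.
Qed.

Lemma partSph_principal s : U s -> forall f : MP, exists q : MP, skeval s f%:F = q%:F.
Proof.
case=> t [gt e] f; rewrite -(skeval_skeq _ _ e).
exact: gen_IP gt _ (IP_poly f).
Qed.

End P5.


Lemma in_In (T : eqType) (x : T) (s : seq T) : x \in s -> List.In x s.
Proof. by elim: s => //= y s IH; rewrite inE => /orP[/eqP ->|/IH]; [left|right]. Qed.

Lemma In_in (T : eqType) (x : T) (s : seq T) : List.In x s -> x \in s.
Proof. by elim: s => //= y s IH [->|/IH]; rewrite inE ?eqxx // => ->; rewrite orbT. Qed.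

Section P6.
Variables (n : nat) (hb : CC) (l p : nat) (c : CC) (cm : nat -> CC).
Local Notation K := (KK n).
Local Notation GR := (grp n).
Local Notation SK := (Defs.skew n).
Local Notation act := (@Defs.act n hb).
Local Notation skmul := (@Defs.skmul n hb).
Local Notation U := (@partSph n hb l p c cm).
Local Notation gen := (@Defs.gen n hb l p c cm).
Implicit Types (g h : GR) (s t : SK) (a b : K).

Lemma coefK_flatten (L : seq SK) g : coefK (flatten L) g = \sum_(x <- L) coefK x g.
Proof.
elim: L => [|x L IH]; first by rewrite big_nil coefK_nil.
by rewrite /= coefK_cat IH big_cons.
Qed.

Lemma ginv1 : ginv (gone n) = gone n.
Proof.
rewrite /ginv /gone /=; congr (_, _); first by rewrite invg1.
by apply/ffunP => j; rewrite !ffunE oppr0.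
Qed.

Lemma coefK_skmul_kelt s k g : coefK (skmul s (kelt k)) g = coefK s g * act g k.
Proof.
rewrite coefK_skmul.
under eq_bigr => x _ do rewrite coefK_kelt.
rewrite /Defs.coefK big_distrl /= [RHS]big_mkcond /=.
apply: eq_bigr => x _.
have -> : (gone n == gmul (ginv x.2) g) = (x.2 == g).
  apply/eqP/eqP => [e|<-]; last by rewrite gmulVg.
  by rewrite -[x.2]gmulg1 e gmulA gmulV gmul1g.
by case: eqP => [->|_]; rewrite ?act0 ?mulr0 ?mul0r.
Qed.

Lemma coefK_kelt_skmul s k g : coefK (skmul (kelt k) s) g = k * coefK s g.
Proof.
rewrite coefK_skmul /kelt big_cons big_nil /= ginv1 gmul1g act1g.
by rewrite [X in X = _]addr0.
Qed.

Lemma sum_neq0 (I : eqType) (r : seq I) (F : I -> K) :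
  \sum_(i <- r) F i != 0 -> exists2 i, i \in r & F i != 0.
Proof.
move=> H; case: (boolP (has (fun i => F i != 0) r)) => [/hasP[i ir Fi]|/hasPn H2].
  by exists i.
by move: H; rewrite big1_seq ?eqxx // => i /andP[_ /H2]; rewrite negbK => /eqP.
Qed.

Lemma UK_inKK s : UK hb U s -> inKK l p s.
Proof.
case=> r [Hr e] g; rewrite e coefK_flatten big_map => /sum_neq0 [u ur].
rewrite coefK_skmul_kelt => /eqP nz.
have cu : coefK u.1 g != 0 by apply/eqP => h; apply: nz; rewrite h mul0r.
exact: (partSph_inKK (Hr u (in_In ur)) cu).
Qed.

Lemma KU_inKK s : KU hb U s -> inKK l p s.
Proof.
case=> r [Hr e] g; rewrite e coefK_flatten big_map => /sum_neq0 [u ur].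
rewrite coefK_kelt_skmul => /eqP nz.
have cu : coefK u.2 g != 0 by apply/eqP => h; apply: nz; rewrite h mulr0.
exact: (partSph_inKK (Hr u (in_In ur)) cu).
Qed.

Definition Mono g := exists u, U u /\ exists b, b != 0 /\ skeq u [:: (b, g)].

Lemma Mono_UK g a : Mono g -> UK hb U [:: (a, g)].
Proof.
case=> u [Uu [b [b0 e]]].
exists [:: (u, act (ginv g) (a / b))]; split.
  by move=> v [<-|//].
move=> h; rewrite /= cats0 coefK_skmul_kelt e !coefK_single.
case: eqP => [<-|_]; last by rewrite mul0r.
by rewrite actKV mulrC divfK.
Qed.

Lemma Mono_KU g a : Mono g -> KU hb U [:: (a, g)].
Proof.
case=> u [Uu [b [b0 e]]].
exists [:: (a / b, u)]; split.
  by move=> v [<-|//].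
move=> h; rewrite /= cats0 coefK_kelt_skmul e !coefK_single.
case: ifP => [_|_]; last by rewrite mulr0.
by rewrite divfK.
Qed.

Lemma UK_nil : UK hb U [::].
Proof. by exists [::]; split. Qed.
Lemma KU_nil : KU hb U [::].
Proof. by exists [::]; split. Qed.

Lemma UK_cat s t : UK hb U s -> UK hb U t -> UK hb U (s ++ t).
Proof.
case=> r [Hr e] [r' [Hr' e']]; exists (r ++ r'); split.
  by move=> u H; case: (List.in_app_or _ _ _ H) => [/Hr|/Hr'].
by rewrite map_cat flatten_cat; apply: skeq_cat.
Qed.

Lemma KU_cat s t : KU hb U s -> KU hb U t -> KU hb U (s ++ t).
Proof.
case=> r [Hr e] [r' [Hr' e']]; exists (r ++ r'); split.
  by move=> u H; case: (List.in_app_or _ _ _ H) => [/Hr|/Hr'].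
by rewrite map_cat flatten_cat; apply: skeq_cat.
Qed.

Lemma UK_skeq s t : UK hb U s -> skeq s t -> UK hb U t.
Proof. by case=> r [Hr e] e2; exists r; split => //; apply: skeq_trans e. Qed.
Lemma KU_skeq s t : KU hb U s -> skeq s t -> KU hb U t.
Proof. by case=> r [Hr e] e2; exists r; split => //; apply: skeq_trans e. Qed.

Lemma skeq_decomp s :
  skeq s (flatten [seq [:: (coefK s g, g)] | g <- undup (map snd s)]).
Proof.
move=> h; rewrite coefK_flatten big_map.
under eq_bigr => g _ do rewrite coefK_single.
rewrite -big_mkcond /=.
case hs: (h \in undup (map snd s)).
  rewrite (eq_bigl (fun g => h == g)); last by move=> g; rewrite eq_sym.
  by rewrite sum_pred1_uniq ?undup_uniq.
rewrite big1_seq; last by move=> g /andP[/eqP -> gs]; move: hs; rewrite gs.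
apply: coefK_eq0 => x xs; apply/eqP => e; move: hs.
by rewrite mem_undup -e map_f.
Qed.

Hypothesis HM : forall g, inT l p g.2 -> Mono g.

Lemma inKK_UK s : inKK l p s -> UK hb U s.
Proof.
move=> H; apply: UK_skeq (skeq_sym (skeq_decomp s)).
elim: (undup (map snd s)) => [|g L IH] /=; first exact: UK_nil.
apply: (@UK_cat [:: (coefK s g, g)]) => //.
have [c0|cn] := eqVneq (coefK s g) 0.
  by rewrite c0; apply: UK_skeq (skeq_sym (skeq_single0 g)); apply: UK_nil.
exact/Mono_UK/HM/H.
Qed.

Lemma inKK_KU s : inKK l p s -> KU hb U s.
Proof.
move=> H; apply: KU_skeq (skeq_sym (skeq_decomp s)).
elim: (undup (map snd s)) => [|g L IH] /=; first exact: KU_nil.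
apply: (@KU_cat [:: (coefK s g, g)]) => //.
have [c0|cn] := eqVneq (coefK s g) 0.
  by rewrite c0; apply: KU_skeq (skeq_sym (skeq_single0 g)); apply: KU_nil.
exact/Mono_KU/HM/H.
Qed.

End P6.


Lemma lin_neq0 n (i : 'I_n) (x : CC) : ('X_i + x%:MP : {mpoly CC[n]}) != 0.
Proof.
apply/eqP => /(congr1 (mcoeff U_(i))).
rewrite mcoeffD mcoeffXU mcoeffC mnm1_eq0 eqxx mulr0 addr0 mcoeff0 => /eqP.
by rewrite oner_eq0.
Qed.

Section P7.
Variables (n : nat) (hb : CC) (l p : nat) (c : CC) (cm : nat -> CC).
Local Notation MP := {mpoly CC[n]}.
Local Notation K := (KK n).
Local Notation GR := (grp n).
Local Notation SK := (Defs.skew n).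
Local Notation act := (@Defs.act n hb).
Local Notation skmul := (@Defs.skmul n hb).
Local Notation U := (@partSph n hb l p c cm).
Local Notation gen := (@Defs.gen n hb l p c cm).
Local Notation Mono := (@Mono n hb l p c cm).
Implicit Types (g h : GR) (s t : SK) (a b : K).

Lemma Mono_gmul g h : Mono g -> Mono h -> Mono (gmul g h).
Proof.
case=> u [Uu [b [b0 e]]] [v [Uv' [b' [b0' e']]]].
exists (skmul u v); split; first exact: partSph_mul.
exists (b * act g b'); split; first by apply: mulf_neq0; [exact: b0|rewrite act_eq0].
apply: (skeq_trans (skmul_skeq hb e e')); exact: skmul_single_skeq.
Qed.

Lemma Mono_gone : Mono (gone n).
Proof.
exists (kelt 1); split; first exact: PK_1.
by exists 1; split; [exact: oner_neq0|].
Qed.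

Lemma Mono_single b g : gen [:: (b, g)] -> b != 0 -> Mono g.
Proof. by move=> gg b0; exists [:: (b, g)]; split; [apply: gen_partSph|exists b]. Qed.

Lemma lin_frac_neq0 (i : 'I_n) (x y : CC) : Uf i + cst n x - cst n y != 0.
Proof.
rewrite /Uf /cst -tofracD -tofracB -addrA -mpolyCB tofrac_eq0.
exact: lin_neq0.
Qed.

Lemma Mono_single1 x : gen [:: x] -> x.1 != 0 -> Mono x.2.
Proof. by case: x => b g; apply: Mono_single. Qed.

Definition gA : GR := (@cyc n, [ffun j : 'I_n => if val j == n.-1 then l%:Z else 0]).
Definition gB : GR := ((@cyc n)^-1%g, [ffun j : 'I_n => if val j == 0%N then - l%:Z else 0]).
Definition gC : GR := (1%g, [ffun=> (l %/ p)%:Z]).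
Definition gD : GR := (1%g, [ffun=> - (l %/ p)%:Z]).

Lemma Mono_A : (0 < n)%N -> Mono gA.
Proof.
move=> n0; apply: (Mono_single1 (gen_A _ _ _ _ _ _)) => /=.
rewrite prodf_seq_neq0; apply/allP => m _ /=.
rewrite /Uv; case: insubP => [i _ _|]; last by rewrite n0.
exact: lin_frac_neq0.
Qed.

Lemma Mono_B : Mono gB.
Proof. apply: (Mono_single1 (gen_B _ _ _ _ _ _)) => /=; exact: oner_neq0. Qed.

Lemma Mono_C : Mono gC.
Proof.
apply: (Mono_single1 (gen_C _ _ _ _ _ _)) => /=.
rewrite prodf_seq_neq0; apply/allP => i _ /=.
rewrite prodf_seq_neq0; apply/allP => m _ /=.
exact: lin_frac_neq0.
Qed.

Lemma Mono_D : Mono gD.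
Proof. apply: (Mono_single1 (gen_D _ _ _ _ _ _)) => /=; exact: oner_neq0. Qed.

Lemma Ufdiff_neq0 (i i1 : 'I_n) : i != i1 -> Uf i1 - Uf i != 0.
Proof.
move=> ne; rewrite /Uf -tofracB tofrac_eq0 subr_eq0.
apply/eqP => /(congr1 (mcoeff U_(i1))); rewrite !mcoeffXU eqxx.
by rewrite (negbTE ne) => /eqP; rewrite oner_eq0.
Qed.

Definition gW (i i1 : 'I_n) : GR := (tperm i i1, [ffun=> 0]).

Lemma Mono_W (i i1 : 'I_n) : val i1 = (val i).+1 -> Mono (gW i i1).
Proof.
move=> e.
have ne : i != i1 by apply/eqP => h; move: e; rewrite h => /n_Sn.
have k0 := Ufdiff_neq0 ne.
move Ek : (Uf i1 - Uf i) k0 => k k0.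
have PKk : PK hb l p c cm k.
  by rewrite -Ek /Uf -tofracB; apply: PK_poly.
have gw1 : gW i i1 != gone n.
  apply/eqP => /(congr1 (fun g : GR => g.1 i)); rewrite /= tpermL perm1 => h.
  by move: ne; rewrite h eqxx.
set cl := cst n (c * l%:R).
have E1 : skmul (@genW n l c i i1) (kelt k) =
  [:: ((1 + cl / k) * act (gW i i1) k, gmul (gW i i1) (gone n));
      (- (cl / k) * act (gone n) k, gmul (gone n) (gone n))].
  by rewrite /genW Ek.
have A0 : 1 + cl / k != 0.
  apply/eqP => h0.
  have : (1 + cl / k) * k = 0 by rewrite h0 mul0r.
  rewrite mulrDl mul1r divfK // -Ek /cl /Uf /cst -tofracB -tofracD.
  move/eqP; rewrite tofrac_eq0 => /eqP/(congr1 (mcoeff U_(i1))).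
  rewrite !mcoeffD mcoeffN !mcoeffXU mcoeffC mnm1_eq0 eqxx (negbTE ne) mcoeff0.
  rewrite mulr0 subr0 addr0 => /eqP; by rewrite oner_eq0.
exists (skmul (@genW n l c i i1) (kelt k) ++ kelt cl); split.
  apply: partSph_cat; last exact: PK_cst.
  by apply: partSph_mul => //; apply/gen_partSph/gen_W.
exists ((1 + cl / k) * act (gW i i1) k); split.
  by apply: mulf_neq0; [exact: A0|rewrite act_eq0; exact: k0].
move=> h; rewrite coefK_cat E1 (gmulg1 (gW i i1)) (gmul1g (gone n)) act1g.
rewrite !coefK_cons !coefK_nil.
move: ((1 + cl / k) * act (gW i i1) k) => B /=.
case: (gone n =P h) => [<-|nh].
  rewrite (negbTE gw1) mulNr (divfK k0).
  by clear E1 A0; move: cl => C; rewrite !addr0 !add0r addNr.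
by move: (if _ then _ else _) => Z; rewrite !addr0.
Qed.

End P7.


Section P8.
Variables (n : nat) (hb : CC) (l p : nat) (c : CC) (cm : nat -> CC).
Local Notation K := (KK n).
Local Notation GR := (grp n).
Local Notation Mono := (@Mono n hb l p c cm).
Implicit Types (g h : GR).

Definition PM (s : {perm 'I_n}) := Mono (s, [ffun=> 0]).

Lemma gmul_perm0 (s t : {perm 'I_n}) :
  gmul (s, [ffun=> 0]) (t, [ffun=> 0]) = ((t * s)%g, [ffun=> 0]) :> GR.
Proof. by congr (_, _); apply/ffunP => j; rewrite !ffunE addr0. Qed.

Lemma PM_mul s t : PM s -> PM t -> PM (t * s)%g.
Proof. by move=> hs ht; rewrite /PM -gmul_perm0; apply: Mono_gmul. Qed.

Lemma PM_1 : PM 1%g.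
Proof. exact: Mono_gone. Qed.

Lemma PM_tperm_d d (x y : 'I_n) : val y = (val x + d)%N -> PM (tperm x y).
Proof.
elim: d x y => [|d IH] x y e.
  have -> : y = x by apply: val_inj; rewrite e addn0.
  by rewrite tperm1; apply: PM_1.
have zn : (val x + d < n)%N.
  by apply: (@ltn_trans (val y)); [rewrite e addnS ltnSn|exact: ltn_ord].
pose z := Ordinal zn.
have xz : PM (tperm x z) by apply: IH.
have ezy : val y = (val z).+1 by rewrite e addnS.
have zy : PM (tperm z y) by exact: (Mono_W hb l p c cm ezy).
have [exz|xnz] := eqVneq x z; first by rewrite exz.
have ynx : y != x.
  apply/eqP => h; move: e; rewrite h => /eqP.
  by rewrite -{1}[val x]addn0 eqn_add2l.
have -> : tperm x y = (tperm z y * tperm x z * tperm z y)%g.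
  have <- : (tperm x z ^ tperm z y)%g = tperm x y.
    by rewrite tpermJ tpermL tpermD // eq_sym.
  by rewrite /conjg tpermV mulgA.
by apply: PM_mul => //; apply: PM_mul.
Qed.

Lemma PM_tperm (x y : 'I_n) : PM (tperm x y).
Proof.
wlog le : x y / (val x <= val y)%N.
  move=> H; case: (leqP (val x) (val y)) => [|/ltnW] h; first exact: H.
  by rewrite tpermC; apply: H.
by apply: (@PM_tperm_d (val y - val x)); rewrite subnKC.
Qed.

Lemma PM_all s : PM s.
Proof.
have [ts -> _] := prod_tpermP s.
apply: (big_ind PM PM_1) => [a b ha hb'|t _]; last exact: PM_tperm.
exact: PM_mul.
Qed.

Definition MT (f : 'I_n -> int) := Mono (1%g, [ffun j => f j]).

Lemma MT_ext f f' : f =1 f' -> MT f -> MT f'.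
Proof.
by move=> e; rewrite /MT; congr (Mono (_, _)); apply/ffunP => j; rewrite !ffunE e.
Qed.

Lemma MT_add f f' : MT f -> MT f' -> MT (fun j => f j + f' j).
Proof.
move=> h h'; have := Mono_gmul h h'.
congr (Mono (_, _)); first by rewrite mulg1.
by apply/ffunP => j; rewrite !ffunE perm1.
Qed.

Lemma MT0 : MT (fun _ => 0).
Proof. exact: Mono_gone. Qed.

Lemma MT_comp (t : {perm 'I_n}) f : MT f -> MT (fun j => f (t j)).
Proof.
move=> h.
have := Mono_gmul (PM_all (t^-1)%g) (Mono_gmul h (PM_all t)).
congr (Mono (_, _)); first by rewrite /= mulg1 mulgV.
by apply/ffunP => j; rewrite /= !ffunE addr0 add0r.
Qed.

Lemma MT_nat f (k : nat) : MT f -> MT (fun j => k%:Z * f j).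
Proof.
move=> h; elim: k => [|k IH].
  by apply: MT_ext MT0 => j; rewrite mul0r.
apply: MT_ext (MT_add IH h) => j.
by rewrite -{2}[f j]mul1r -mulrDl -PoszD addn1.
Qed.

Lemma MT_int f (z : int) : MT f -> MT (fun j => - f j) -> MT (fun j => z * f j).
Proof.
move=> h hN; case: z => k; first exact: MT_nat.
apply: MT_ext (MT_nat k.+1 hN) => j.
by rewrite NegzE mulrN mulNr.
Qed.

Lemma MT_sum (I : Type) (r : seq I) (F : I -> 'I_n -> int) :
  (forall i, MT (F i)) -> MT (fun j => \sum_(i <- r) F i j).
Proof.
move=> H; elim: r => [|i r IH].
  by apply: MT_ext MT0 => j; rewrite big_nil.
by apply: MT_ext (MT_add (H i) IH) => j; rewrite big_cons.
Qed.

Definition Ej (j0 : 'I_n) (v : int) := fun m : 'I_n => if m == j0 then v else 0.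

Lemma MT_Ej_move j0 v j : MT (Ej j0 v) -> MT (Ej j v).
Proof.
move=> h; apply: MT_ext (MT_comp (tperm j j0) h) => m.
rewrite /Ej; congr (if _ then _ else _).
apply/eqP/eqP => [hh|->]; last exact: tpermL.
by apply: (@perm_inj _ (tperm j j0)); rewrite hh tpermL.
Qed.

Hypothesis n0 : (0 < n)%N.

Lemma MT_El j : MT (Ej j l%:Z).
Proof.
have x0n : (n.-1 < n)%N by rewrite prednK.
pose x0 := Ordinal x0n.
apply: (@MT_Ej_move ((@cyc n) x0)).
have := Mono_gmul (Mono_A hb l p c cm n0) (PM_all ((@cyc n)^-1)%g).
congr (Mono (_, _)); first by rewrite mulVg.
apply/ffunP => m; rewrite !ffunE addr0 /Ej.
congr (if _ then _ else _).
have -> : (val ((@cyc n)^-1%g m) == n.-1) = ((@cyc n)^-1%g m == x0) by [].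
exact: (can2_eq (permKV _) (permK _)).
Qed.

Lemma MT_ElN j : MT (fun m => - Ej j l%:Z m).
Proof.
have y0n : (0 < n)%N by [].
pose y0 := Ordinal y0n.
have : MT (Ej (((@cyc n)^-1)%g y0) (- l%:Z)).
  have := Mono_gmul (Mono_B n hb l p c cm) (PM_all (@cyc n)).
  congr (Mono (_, _)); first by rewrite mulgV.
  apply/ffunP => m; rewrite !ffunE addr0 /Ej.
  congr (if _ then _ else _).
  have -> : (val ((@cyc n) m) == 0%N) = ((@cyc n) m == y0) by [].
  exact: (can2_eq (permK _) (permKV _)).
move/(MT_Ej_move j); apply: MT_ext => m.
by rewrite /Ej; case: ifP; rewrite ?oppr0.
Qed.

Lemma HM g : inT l p g.2 -> Mono g.
Proof.
case: g => s t [k [a Ha]] /=.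
have Mt : MT (fun j => t j).
  apply: (@MT_ext (fun m => \sum_(j <- enum 'I_n) a j * Ej j l%:Z m + k * (l %/ p)%:Z)).
    move=> m; rewrite Ha; congr (_ + _).
    rewrite (bigD1_seq m) ?mem_enum ?enum_uniq //= /Ej eqxx.
    rewrite big1 ?addr0 // => j /negbTE; rewrite eq_sym => ->.
    by rewrite mulr0.
  apply: MT_add; first by apply: MT_sum => j; apply: MT_int; [apply: MT_El|apply: MT_ElN].
  apply: MT_int; first exact: (Mono_C n hb l p c cm).
  exact: (Mono_D n hb l p c cm).
have := Mono_gmul (PM_all s) Mt.
congr (Mono (_, _)); first by rewrite mul1g.
by apply/ffunP => j; rewrite !ffunE add0r.
Qed.

End P8.

Unset Implicit Arguments.

Theorem proposition3p14 (n l p : nat) (hbar c : CC) (cm : nat -> CC) :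
  (0 < n)%N -> (0 < l)%N -> (0 < p)%N -> (p %| l)%N ->
  hbar != 0 ->
  (forall m : nat, (0 < m < l)%N -> ~~ (p %| m)%N -> cm m = 0) ->
  @principal_galois_order n hbar l p (@partSph n hbar l p c cm).
Proof.
move=> n0 _ _ _ _ _.
split; last exact: partSph_principal.
split.
- split.
  + exact: partSph_inKK.
  + by move=> s t e us; apply: partSph_skeq us e.
  + exact: PK_poly.
  + exact: partSph_cat.
  + exact: partSph_mul.
- move=> s; split; first exact: UK_inKK.
  apply: inKK_UK; exact: HM.
- move=> s; split; first exact: KU_inKK.
  apply: inKK_KU; exact: HM.
Qed.
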